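(* Let $G$ be a graph, $e=\{u,v\}\in\binom{V(G)}{2}$, $G^+=G+e$ and $G^-=G-e$. For $\circ\in\{+,-\}$ let $S^\circ=S(G^\circ)$, $R^\circ=R(G^\circ)$, and $W^\circ=C_u(G^\circ)\cup C_v(G^\circ)$. Then: (i) if $\{u,v\} \cap S^+ = \varnothing$, then $N_{G^-}(W^+) \subseteq N_{G^+}(W^+) \subseteq S^+ \subseteq S^-$, $R^- \subseteq R^+$, and $W^- \subseteq W^+$; (ii) if $\{u,v\} \cap S^+ \neq \varnothing$, then $N_{G^-}(W^-) \subseteq N_{G^+}(W^-) \subseteq S^- \subseteq S^+$, $R^+ \subseteq R^-$, and $W^+ \subseteq W^-$.
   Context: $G+e$ and $G-e$ are the graphs on $V(G)$ with edge sets $E(G)\cup\{e\}$ and $E(G)\setminus\{e\}$. For a graph $H$ and $X\subseteq V(H)$, $N_H(X)=\{x\in V(H)\setminus X: xy\in E(H)\text{ for some }y\in X\}$. The strong $4$-core $S(H)$ is the maximal $X\subseteq V(H)$ with $|N_H(x)\cap X|\ge4$ for all $x\in X\cup N_H(X)$; $P(H)=N_H(S(H))$, $R(H)=V(H)\setminus(S(H)\cup P(H))$. For $x\in P(H)\cup R(H)$, $C_x(H)$ is the vertex set of the component of $H[P(H)\cup R(H)]$ (equivalently of $H-S(H)$) containing $x$; for $x\in S(H)$, $C_x(H)=\varnothing$. *)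

(* Defs.v *)
From mathcomp Require Import all_boot.
Set Implicit Arguments. Unset Strict Implicit. Unset Printing Implicit Defensive.

(* Graphs: a (simple) graph on a finite vertex type T is an edge relation
   H : rel T (symmetry / irreflexivity are hypotheses of the theorem). *)
Section Defs.
Variable T : finType.

Definition addE (G : rel T) (u v : T) : rel T :=
  fun x y => [|| G x y, (x == u) && (y == v) | (x == v) && (y == u)].
Definition delE (G : rel T) (u v : T) : rel T :=
  fun x y => G x y && ~~ (((x == u) && (y == v)) || ((x == v) && (y == u))).

Definition nbr (H : rel T) (X : {set T}) : {set T} :=
  [set x | (x \notin X) && [exists y in X, H x y]].
Definition nbr1 (H : rel T) (x : T) : {set T} := [set y | H x y].

Definition core_good (H : rel T) (X : {set T}) : bool :=
  [forall x in X :|: nbr H X, 4 <= #|nbr1 H x :&: X|].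

(* The strong 4-core: the maximal good set. Good sets are closed under
   union, so the maximal one is the union of all good sets. *)
Definition score (H : rel T) : {set T} :=
  \bigcup_(X : {set T} | core_good H X) X.
Definition pcore (H : rel T) : {set T} := nbr H (score H).
Definition rcore (H : rel T) : {set T} := ~: (score H :|: pcore H).

Definition outside_rel (H : rel T) : rel T :=
  fun a b => [&& H a b, a \notin score H & b \notin score H].

Definition compC (H : rel T) (x : T) : {set T} :=
  if x \in score H then set0 else [set y | connect (outside_rel H) x y].
End Defs.

(* Main.v *)
Require Import Defs.
From mathcomp Require Import all_boot.
Set Implicit Arguments. Unset Strict Implicit.

Section Gen.
Variable T : finType.
Implicit Types (H : rel T) (X : {set T}).

Lemma score_max H X : core_good H X -> X \subset score H.
Proof. by move=> gX; apply: (bigcup_sup X). Qed.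

Lemma card_mono H (X Y : {set T}) x : X \subset Y -> #|nbr1 H x :&: X| <= #|nbr1 H x :&: Y|.
Proof. by move=> sXY; apply: subset_leq_card; apply: setIS. Qed.

Lemma score_good H : core_good H (score H).
Proof.
apply/forall_inP => x /setUP [].
  move/bigcupP=> [X gX xX].
  have := card_mono H x (score_max gX); apply: leq_trans.
  by move/forall_inP: gX; apply; rewrite inE xX.
rewrite inE => /andP [_ /exists_inP [y /bigcupP [X gX yX] Hxy]].
have := card_mono H x (score_max gX); apply: leq_trans.
move/forall_inP: gX; apply; rewrite !inE.
case: (boolP (x \in X)) => //= _; by apply/exists_inP; exists y.
Qed.

Lemma compC_notin H w y : y \in compC H w -> y \notin score H.
Proof.
rewrite /compC; case: ifP => [_|wS]; first by rewrite inE.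
rewrite inE => /connectP [p pP ->].
elim: p w wS pP => [|a p IH] w wS /=; first by rewrite wS.
move=> /andP [/and3P [_ _ aS] pP]; exact: (IH a (negbTE aS) pP).
Qed.

Lemma compC_self H w : w \notin score H -> w \in compC H w.
Proof. by rewrite /compC => /negbTE ->; rewrite inE connect0. Qed.

Lemma compC_ext H w y x : y \in compC H w -> H y x -> x \notin score H ->
  x \in compC H w.
Proof.
move=> yC Hyx xS; have yS := compC_notin yC.
move: yC; rewrite /compC; case: ifP => _; first by rewrite inE.
rewrite !inE => cy; apply: connect_trans cy (connect1 _).
by rewrite /outside_rel Hyx yS xS.
Qed.

Lemma compC_sub H1 H2 w : subrel (outside_rel H1) (outside_rel H2) ->
  (w \notin score H1 -> w \notin score H2) -> compC H1 w \subset compC H2 w.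
Proof.
move=> sub nS; rewrite /compC; case: ifP => [_|wS]; first exact: sub0set.
rewrite (negbTE (nS (negbT wS))).
apply/subsetP => y; rewrite !inE; apply: connect_sub => a b /sub.
exact: connect1.
Qed.

Lemma nbr_mono H1 H2 X : subrel H1 H2 -> nbr H1 X \subset nbr H2 X.
Proof.
move=> sub; apply/subsetP => x; rewrite !inE => /andP [-> /exists_inP [y yX Hxy]].
by apply/exists_inP; exists y => //; apply: sub.
Qed.
End Gen.

Section Main.
Variables (T : finType) (G : rel T) (u v : T).
Hypothesis sG : symmetric G.
Local Notation Gp := (addE G u v).
Local Notation Gm := (delE G u v).
Local Notation E x y := ((x == u) && (y == v) || (x == v) && (y == u)).

Lemma Gm_Gp : subrel Gm Gp.
Proof. by move=> x y; rewrite /delE /addE => /andP [-> _]. Qed.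

Lemma Gp_cases x y : Gp x y -> Gm x y \/ E x y.
Proof.
rewrite /addE /delE; case: (G x y) => /=; last by right.
by case: (E x y); [right | left].
Qed.

Lemma Gp_sym : symmetric Gp.
Proof.
move=> x y; rewrite /addE sG; congr (_ || _).
by rewrite orbC (andbC (y == u)) (andbC (y == v)).
Qed.

Lemma Gm_sym : symmetric Gm.
Proof.
move=> x y; rewrite /delE sG; congr (_ && ~~ _).
by rewrite orbC (andbC (y == u)) (andbC (y == v)).
Qed.

Lemma E_in (S : {set T}) x y : E x y -> (u \in S) || (v \in S) -> (x \in S) || (y \in S).
Proof.
by case/orP => /andP [/eqP -> /eqP ->] //; rewrite orbC.
Qed.

Lemma E_out (S : {set T}) x y : E x y -> u \notin S -> v \notin S -> (y \notin S).
Proof.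
by move=> + uS vS; case/orP => /andP [_ /eqP ->].
Qed.

Lemma case1_S : u \notin score Gp -> v \notin score Gp ->
  score Gp \subset score Gm.
Proof.
move=> uS vS; apply: score_max; apply/forall_inP => x xX.
have gp := score_good Gp.
have : 3 < #|nbr1 Gp x :&: score Gp|.
  move/forall_inP: gp; apply; case/setUP: xX => [xS|]; first by rewrite inE xS.
  rewrite !inE => /andP [xn /exists_inP [y yS Hxy]]; apply/orP; right; rewrite xn /=; apply/exists_inP.
  by exists y => //; apply: Gm_Gp.
move/leq_trans; apply; apply: subset_leq_card; apply/subsetP => y.
rewrite !inE => /andP [Hxy yS]; rewrite yS andbT.
case: (Gp_cases Hxy) => // /E_out /(_ uS vS); by rewrite yS.
Qed.

Lemma case2_S : (u \in score Gp) || (v \in score Gp) ->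
  score Gm \subset score Gp.
Proof.
move=> uvS; apply: subset_trans (subsetUl (score Gm) (score Gp)) _.
apply: score_max; apply/forall_inP => x xX.
have gp := score_good Gp; have gm := score_good Gm.
case: (boolP (x \in score Gp :|: nbr Gp (score Gp))) => xp.
  have := forall_inP gp x xp; move/leq_trans; apply.
  by apply: card_mono; apply: subsetUr.
suff xm : x \in score Gm :|: nbr Gm (score Gm).
  have := forall_inP gm x xm; move/leq_trans; apply.
  apply: subset_leq_card; apply/subsetP => y; rewrite !inE.
  by move=> /andP [/Gm_Gp -> ->].
move: xp xX; rewrite !inE negb_or => /andP [xSp nxp].
case/orP => [/orP [-> //| ]|]; first by rewrite (negbTE xSp).
move=> /andP [xn /exists_inP [y yS Hxy]].
have ySp : y \notin score Gp.
  apply: contra nxp => ySp; rewrite xSp; apply/exists_inP; by exists y.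
move: yS; rewrite inE (negbTE ySp) orbF => ySm.
case: (Gp_cases Hxy) => [Hm|He].
  case: (boolP (x \in score Gm)) => //= _; apply/exists_inP; by exists y.
by move: (E_in He uvS); rewrite (negbTE xSp) (negbTE ySp).
Qed.

End Main.

Section M3.
Variables (T : finType) (G : rel T) (u v : T).
Hypothesis sG : symmetric G.
Local Notation Gp := (addE G u v).
Local Notation Gm := (delE G u v).

Lemma part1 : (u \notin score Gp) && (v \notin score Gp) ->
  let Wp := compC Gp u :|: compC Gp v in
  let Wm := compC Gm u :|: compC Gm v in
  [/\ nbr Gm Wp \subset nbr Gp Wp, nbr Gp Wp \subset score Gp, score Gp \subset score Gm,
         rcore Gm \subset rcore Gp & Wm \subset Wp].
Proof.
move=> /andP [uS vS] Wp Wm; have sub := case1_S uS vS.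
split.
- exact: nbr_mono (@Gm_Gp _ G u v).
- apply/subsetP => x; rewrite inE => /andP [xW /exists_inP [y yW Hxy]].
  case: (boolP (x \in score Gp)) => // xS; case/negP: xW.
  case/setUP: yW => yC; apply/setUP; [left|right]; apply: compC_ext yC _ xS;
    by rewrite Gp_sym.
- exact: sub.
- apply/subsetP => x; rewrite /rcore !in_setC !in_setU => /norP [xSm xnm].
  apply/norP; split; first by apply: contra xSm; apply: (subsetP sub).
  apply/negP; rewrite inE => /andP [xSp /exists_inP [y yS Hxy]].
  case: (Gp_cases Hxy) => [Hm|He].
    case/negP: xnm; rewrite inE xSm /=; apply/exists_inP; exists y => //.
    exact: (subsetP sub).
  by move: (E_out He uS vS); rewrite yS.
- have so : subrel (outside_rel Gm) (outside_rel Gp).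
    move=> a b /and3P [Hab aS bS]; rewrite /outside_rel (Gm_Gp Hab) /=.
    by rewrite (contra (subsetP sub a) aS) (contra (subsetP sub b) bS).
  by apply: setUSS; apply: compC_sub so _.
Qed.

Lemma part2 : (u \in score Gp) || (v \in score Gp) ->
  let Wp := compC Gp u :|: compC Gp v in
  let Wm := compC Gm u :|: compC Gm v in
  [/\ nbr Gm Wm \subset nbr Gp Wm, nbr Gp Wm \subset score Gm, score Gm \subset score Gp,
         rcore Gp \subset rcore Gm & Wp \subset Wm].
Proof.
move=> h Wp Wm; have sub := case2_S h.
split.
- exact: nbr_mono (@Gm_Gp _ G u v).
- apply/subsetP => x; rewrite inE => /andP [xW /exists_inP [y yW Hxy]].
  case: (boolP (x \in score Gm)) => // xS; case/negP: xW.
  case: (Gp_cases Hxy) => [Hm|He].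
    case/setUP: yW => yC; apply/setUP; [left|right]; apply: compC_ext yC _ xS;
      by rewrite Gm_sym.
  case/orP: He => /andP [/eqP xu _]; rewrite xu; apply/setUP.
    by left; apply: compC_self; move: xS; rewrite xu.
  by right; apply: compC_self; move: xS; rewrite xu.
- exact: sub.
- apply/subsetP => x; rewrite /rcore !in_setC !in_setU => /norP [xSp xnp].
  apply/norP; split; first by apply: contra xSp; apply: (subsetP sub).
  apply/negP; rewrite inE => /andP [xSm /exists_inP [y yS Hxy]].
  case/negP: xnp; rewrite inE xSp /=; apply/exists_inP; exists y.
    exact: (subsetP sub).
  exact: Gm_Gp.
- have so : subrel (outside_rel Gp) (outside_rel Gm).
    move=> a b /and3P [Hab aS bS]; rewrite /outside_rel.
    rewrite (contra (subsetP sub a) aS) (contra (subsetP sub b) bS) !andbT.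
    case: (Gp_cases Hab) => // He.
    by move: (E_in He h); rewrite (negbTE aS) (negbTE bS).
  by apply: setUSS; apply: compC_sub so _; apply: contra; apply: (subsetP sub).
Qed.
End M3.

Theorem lemma4p9 (T : finType) (G : rel T) (u v : T) :
  symmetric G -> irreflexive G -> u != v ->
  let Gp := addE G u v in
  let Gm := delE G u v in
  let Sp := score Gp in let Sm := score Gm in
  let Rp := rcore Gp in let Rm := rcore Gm in
  let Wp := compC Gp u :|: compC Gp v in
  let Wm := compC Gm u :|: compC Gm v in
  ((u \notin Sp) && (v \notin Sp) ->
     [/\ nbr Gm Wp \subset nbr Gp Wp, nbr Gp Wp \subset Sp, Sp \subset Sm,
         Rm \subset Rp & Wm \subset Wp]) /\
  ((u \in Sp) || (v \in Sp) ->
     [/\ nbr Gm Wm \subset nbr Gp Wm, nbr Gp Wm \subset Sm, Sm \subset Sp,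
         Rp \subset Rm & Wp \subset Wm]).
Proof.
move=> sG _ _ /=; split.
- exact: (part1 sG).
- exact: (part2 sG).
Qed.
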